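(* Suppose $f$ is twice differentiable at every point of $\mathbb{R}^{n\times p}$, and let $X\in\mathcal{S}_{n,p}$ be a first-order stationary point of (OCP). Then every eigenvalue of $\mathrm{hess} f(X)$ is an eigenvalue of $\nabla^2h(X)$; conversely, every eigenvalue of $\nabla^2h(X)$ is either an eigenvalue of $\mathrm{hess} f(X)$ or is at least $2\beta-M_2$.
   Context: $f:\mathbb{R}^{n\times p}\to\mathbb{R}$ ($n\ge p$) is differentiable with $f,\nabla f$ locally Lipschitz. (OCP): $\min f(X)$ s.t. $X^\top X=I_p$; $\mathcal{S}_{n,p}=\{X:X^\top X=I_p\}$. $\langle A,B\rangle=\mathrm{tr}(A^\top B)$, $\Phi(M):=\frac12(M+M^\top)$. For $X\in\mathcal{S}_{n,p}$, $\mathcal{T}_X:=\{D:\Phi(D^\top X)=0\}$ and $\mathcal{P}_{\mathcal{T}_X}(W):=W-X\Phi(X^\top W)$ is the orthogonal projection onto $\mathcal{T}_X$. $X\in\mathcal{S}_{n,p}$ is a first-order stationary point of (OCP) if $\nabla f(X)-X\Phi(X^\top\nabla f(X))=0$. The Riemannian Hessian $\mathrm{hess} f(X):\mathcal{T}_X\to\mathcal{T}_X$ is $\mathrm{hess} f(X)[D]:=\mathcal{P}_{\mathcal{T}_X}\big(\nabla^2f(X)[D]-D\Phi(X^\top\nabla f(X))\big)$, so that $\langle D_1,\mathrm{hess} f(X)[D_2]\rangle=\langle D_1,\nabla^2f(X)[D_2]-D_2\Phi(X^\top\nabla f(X))\rangle$ for $D_1,D_2\in\mathcal{T}_X$. $\mathcal{A}(X):=\frac32I_p-\frac12X^\top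 X$, $g(X):=f(X\mathcal{A}(X))$, $h(X):=g(X)+\frac\beta4\|X^\top X-I_p\|_F^2$ with $\beta>0$; $\nabla^2h(X)$ is viewed as a linear operator on $\mathbb{R}^{n\times p}$. $\Omega:=\{X:\|X\|_2\le1+\frac1{12}\}$, $M_2:=\sup_{X\ne Y\in\Omega}\frac{\|\nabla g(X)-\nabla g(Y)\|_F}{\|X-Y\|_F}$. *)

(* Defs.v *)
From HB Require Import structures.
From mathcomp Require Import all_boot all_order all_algebra.
From mathcomp Require Import all_classical all_reals all_analysis.
Set Implicit Arguments. Unset Strict Implicit. Unset Printing Implicit Defensive.
Import Order.TTheory GRing.Theory Num.Theory.
Import numFieldNormedType.Exports.
Local Open Scope classical_set_scope.
Local Open Scope ring_scope.

Section Defs.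
Variables (R : realType) (n p : nat).

Definition frob_inner {m k : nat} (A B : 'M[R]_(m, k)) : R := \tr (A^T *m B).
Definition frob {m k : nat} (A : 'M[R]_(m, k)) : R :=
  Num.sqrt (\sum_i \sum_j A i j ^+ 2).

Definition opnorm2 {m k : nat} (A : 'M[R]_(m, k)) : R :=
  sup [set frob (A *m v) | v in [set v : 'cV[R]_k | frob v <= 1]].

Definition Phi {k : nat} (M : 'M[R]_k) : 'M[R]_k := 2^-1 *: (M + M^T).

(* Euclidean gradient w.r.t. the Frobenius inner product:
   <grad F X, D> = 'd F X D, i.e. (grad F X)_{ij} = dF(X)[E_ij] *)
Definition grad (F : 'M[R]_(n, p) -> R) (X : 'M[R]_(n, p)) : 'M[R]_(n, p) :=
  \matrix_(i, j) ('d F X (delta_mx i j : 'M[R]_(n, p))).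

Definition ehess (F : 'M[R]_(n, p) -> R) (X D : 'M[R]_(n, p)) : 'M[R]_(n, p) :=
  'd (grad F) X D.

Definition twice_differentiable (F : 'M[R]_(n, p) -> R) (X : 'M[R]_(n, p)) :=
  differentiable F X /\ differentiable (grad F) X.

Definition stiefel (X : 'M[R]_(n, p)) : Prop := X^T *m X = 1%:M.

Definition tangent (X D : 'M[R]_(n, p)) : Prop := Phi (D^T *m X) = 0.

Definition Ptan (X W : 'M[R]_(n, p)) : 'M[R]_(n, p) := W - X *m Phi (X^T *m W).

Definition first_order_stationary (F : 'M[R]_(n, p) -> R) (X : 'M[R]_(n, p)) :=
  stiefel X /\ grad F X - X *m Phi (X^T *m grad F X) = 0.

Definition rhess (F : 'M[R]_(n, p) -> R) (X D : 'M[R]_(n, p)) : 'M[R]_(n, p) :=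
  Ptan X (ehess F X D - D *m Phi (X^T *m grad F X)).

Definition rhess_eigenvalue (F : 'M[R]_(n, p) -> R) (X : 'M[R]_(n, p)) (l : R) :=
  exists D : 'M[R]_(n, p), [/\ tangent X D, D != 0 & rhess F X D = l *: D].

Definition ehess_eigenvalue (F : 'M[R]_(n, p) -> R) (X : 'M[R]_(n, p)) (l : R) :=
  exists D : 'M[R]_(n, p), D != 0 /\ ehess F X D = l *: D.

Definition Amap (X : 'M[R]_(n, p)) : 'M[R]_p :=
  (3 / 2) *: 1%:M - 2^-1 *: (X^T *m X).

Definition gfun (f : 'M[R]_(n, p) -> R) (X : 'M[R]_(n, p)) : R :=
  f (X *m Amap X).

Definition hfun (f : 'M[R]_(n, p) -> R) (beta : R) (X : 'M[R]_(n, p)) : R :=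
  gfun f X + beta / 4 * frob (X^T *m X - 1%:M) ^+ 2.

Definition Omega : set 'M[R]_(n, p) :=
  [set X | opnorm2 X <= 1 + 12^-1].

Definition M2 (f : 'M[R]_(n, p) -> R) : \bar R :=
  ereal_sup [set (frob (grad (gfun f) XY.1 - grad (gfun f) XY.2) / frob (XY.1 - XY.2))%:E
            | XY in [set XY : 'M[R]_(n, p) * 'M[R]_(n, p) |
                     [/\ Omega XY.1, Omega XY.2 & XY.1 != XY.2]]
            ].

Definition loc_lipschitz_R (F : 'M[R]_(n, p) -> R) : Prop :=
  forall X, exists r L : R, 0 < r /\
    forall Y Z, frob (Y - X) < r -> frob (Z - X) < r ->
      `|F Y - F Z| <= L * frob (Y - Z).

Definition loc_lipschitz_M (F : 'M[R]_(n, p) -> 'M[R]_(n, p)) : Prop :=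
  forall X, exists r L : R, 0 < r /\
    forall Y Z, frob (Y - X) < r -> frob (Z - X) < r ->
      frob (F Y - F Z) <= L * frob (Y - Z).

End Defs.

(* Main.v *)
Require Import Defs.
From HB Require Import structures.
From mathcomp Require Import all_boot all_order all_algebra.
From mathcomp Require Import all_classical all_reals all_analysis.
From mathcomp Require Import ring lra.
Import Order.TTheory GRing.Theory Num.Theory.
Import numFieldNormedType.Exports.
Local Open Scope classical_set_scope.
Local Open Scope ring_scope.
Set Implicit Arguments. Unset Strict Implicit. Unset Printing Implicit Defensive.

Section Found.
Variable R : realType.
Context {V : normedModType R}.

Lemma is_diff_sum (W : normedModType R) (I : Type) (r : seq I) (f : I -> V -> W) (df : I -> V -> W) x :
  (forall i, is_diff x (f i) (df i)) ->
  is_diff x (fun y => \sum_(i <- r) f i y) (fun v => \sum_(i <- r) df i v).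
Proof.
move=> H; elim: r => [|a r IH].
  have -> : (fun y : V => \sum_(i <- [::]) f i y) = cst 0 by apply/funext=> y; rewrite big_nil.
  apply: DiffDef; first exact: differentiable_cst.
  by rewrite diff_cst; apply/funext=> v; rewrite big_nil.
have -> : (fun y => \sum_(i <- a :: r) f i y) = f a + (fun y => \sum_(i <- r) f i y).
  by apply/funext=> y; rewrite big_cons.
apply: (is_diff_eq (is_diffD (H a) IH)).
by apply/funext=> v; rewrite big_cons.
Qed.

Lemma is_diffZl (W : normedModType R) (k dk : V -> R) (c : W) x :
  is_diff x k dk -> is_diff x (fun y => k y *: c) (fun v => dk v *: c).
Proof.
move=> [dkx dkv]; apply: DiffDef; first exact: differentiableZl.
by rewrite diffZl // dkv.
Qed.

Lemma is_diff_coord m k x (i : 'I_m) (j : 'I_k) (F dF : V -> 'M[R]_(m,k)) :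
  is_diff x F dF -> is_diff x (fun y => F y i j) (fun v => dF v i j).
Proof.
move=> HF.
have @c : {linear 'M[R]_(m, k) -> R}.
  by exists (fun N : 'M[R]_(_, _) => N i j); do 2![eexists]; do ?[constructor];
     rewrite ?mxE// => ? *; rewrite ?mxE//; move=> ?; rewrite !mxE.
have hc : forall z, is_diff z c c.
  move=> z; apply: DiffDef; first exact/linear_differentiable/coord_continuous.
  by rewrite diff_lin //; exact: coord_continuous.
have -> : (fun y => F y i j) = c \o F by [].
have -> : (fun v => dF v i j) = c \o dF by [].
exact: is_diff_comp.
Qed.

Lemma is_diff_mx m k x (F : V -> 'M[R]_(m,k)) (dF : V -> 'M[R]_(m,k)) :
  (forall i j, is_diff x (fun y => F y i j) (fun v => dF v i j)) -> is_diff x F dF.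
Proof.
move=> H.
have -> : F = (fun y => \sum_(i <- index_enum 'I_m) \sum_(j <- index_enum 'I_k) F y i j *: delta_mx i j).
  by apply/funext=> y; rewrite [LHS]matrix_sum_delta.
apply: is_diff_eq.
  apply: is_diff_sum => i; apply: is_diff_sum => j; exact: is_diffZl.
by apply/funext=> v; rewrite [RHS]matrix_sum_delta.
Qed.

Lemma is_diff_mulmx a b c x (F dF : V -> 'M[R]_(a,b)) (G dG : V -> 'M[R]_(b,c)) :
  is_diff x F dF -> is_diff x G dG ->
  is_diff x (fun y => F y *m G y) (fun v => dF v *m G x + F x *m dG v).
Proof.
move=> HF HG; apply: is_diff_mx => i j.
have -> : (fun y => (F y *m G y) i j) = (fun y => \sum_(l <- index_enum 'I_b) ((fun y => F y i l) * (fun y => G y l j)) y).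
  by apply/funext=> y; rewrite mxE.
apply: is_diff_eq.
  apply: is_diff_sum => l; apply: is_diffM; exact: is_diff_coord.
apply/funext=> v /=; rewrite !mxE -big_split /=; apply: eq_bigr => l _.
by rewrite /= !fctE addrC mulrC; congr (_ + _); rewrite mulrC.
Qed.


Lemma isd_cst (W : normedModType R) (c : W) x : is_diff x (fun _ : V => c) (fun _ => 0).
Proof. apply: DiffDef; first exact: differentiable_cst. by rewrite diff_cst. Qed.

Lemma isd_id x : is_diff x (fun y : V => y) (fun v => v).
Proof. exact: is_diff_id. Qed.

Lemma isd_add (W : normedModType R) (F dF G dG : V -> W) x :
  is_diff x F dF -> is_diff x G dG -> is_diff x (fun y => F y + G y) (fun v => dF v + dG v).
Proof. move=> HF HG; exact: (is_diffD HF HG). Qed.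

Lemma isd_opp (W : normedModType R) (F dF : V -> W) x :
  is_diff x F dF -> is_diff x (fun y => - F y) (fun v => - dF v).
Proof. move=> HF; exact: (is_diffN HF). Qed.

Lemma isd_sub (W : normedModType R) (F dF G dG : V -> W) x :
  is_diff x F dF -> is_diff x G dG -> is_diff x (fun y => F y - G y) (fun v => dF v - dG v).
Proof. move=> HF HG; exact: (isd_add HF (isd_opp HG)). Qed.

Lemma isd_scale (W : normedModType R) (k : R) (F dF : V -> W) x :
  is_diff x F dF -> is_diff x (fun y => k *: F y) (fun v => k *: dF v).
Proof. move=> HF; exact: (is_diffZ k HF). Qed.

Lemma isd_tr m k x (F dF : V -> 'M[R]_(m,k)) :
  is_diff x F dF -> is_diff x (fun y => (F y)^T) (fun v => (dF v)^T).
Proof.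
move=> HF; apply: is_diff_mx => i j.
have -> : (fun y => (F y)^T i j) = (fun y => F y j i) by apply/funext=> y; rewrite mxE.
have -> : (fun v => (dF v)^T i j) = (fun v => dF v j i) by apply/funext=> y; rewrite mxE.
exact: is_diff_coord.
Qed.

Lemma isd_trace m x (F dF : V -> 'M[R]_m) :
  is_diff x F dF -> is_diff x (fun y => \tr (F y)) (fun v => \tr (dF v)).
Proof.
move=> HF; rewrite /mxtrace; apply: is_diff_sum => i; exact: is_diff_coord.
Qed.

End Found.

Section Alg.
Variable R : realType.

Lemma fi_sum m k (A B : 'M[R]_(m,k)) :
  frob_inner A B = \sum_i \sum_j A i j * B i j.
Proof.
rewrite /frob_inner /mxtrace exchange_big /=; apply: eq_bigr => j _.
by rewrite mxE; apply: eq_bigr => i _; rewrite mxE.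
Qed.

Lemma fi_delta m k (A : 'M[R]_(m,k)) i j : frob_inner A (delta_mx i j) = A i j.
Proof.
rewrite fi_sum (bigD1 i) //= (bigD1 j) //= big1 => [|l lj].
  rewrite big1 => [|l li]; first by rewrite mxE !eqxx mulr1 !addr0.
  by rewrite big1 // => r _; rewrite mxE (negbTE li) mulr0.
by rewrite mxE eqxx (negbTE lj) mulr0.
Qed.

Lemma frob_sq m k (A : 'M[R]_(m,k)) : frob A ^+ 2 = frob_inner A A.
Proof.
rewrite /frob sqr_sqrtr ?fi_sum; last by apply: sumr_ge0 => i _; apply: sumr_ge0 => j _; exact: sqr_ge0.
by apply: eq_bigr => i _; apply: eq_bigr => j _; rewrite expr2.
Qed.

Lemma frob_ge0 m k (A : 'M[R]_(m,k)) : 0 <= frob A.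
Proof. exact: sqrtr_ge0. Qed.

Lemma fi_ge0 m k (A : 'M[R]_(m,k)) : 0 <= frob_inner A A.
Proof. by rewrite -frob_sq sqr_ge0. Qed.

Lemma fiC m k (A B : 'M[R]_(m,k)) : frob_inner A B = frob_inner B A.
Proof. by rewrite !fi_sum; apply: eq_bigr => i _; apply: eq_bigr => j _; rewrite mulrC. Qed.

Lemma fiDr m k (A B C : 'M[R]_(m,k)) : frob_inner A (B + C) = frob_inner A B + frob_inner A C.
Proof. by rewrite /frob_inner mulmxDr mxtraceD. Qed.

Lemma fiZr m k (A B : 'M[R]_(m,k)) a : frob_inner A (a *: B) = a * frob_inner A B.
Proof. by rewrite /frob_inner -scalemxAr mxtraceZ. Qed.

Lemma fiNr m k (A B : 'M[R]_(m,k)) : frob_inner A (- B) = - frob_inner A B.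
Proof. by rewrite /frob_inner mulmxN linearN. Qed.

Lemma fiBr m k (A B C : 'M[R]_(m,k)) : frob_inner A (B - C) = frob_inner A B - frob_inner A C.
Proof. by rewrite fiDr fiNr. Qed.

Lemma fiDl m k (A B C : 'M[R]_(m,k)) : frob_inner (B + C) A = frob_inner B A + frob_inner C A.
Proof. by rewrite fiC fiDr !(fiC A). Qed.
Lemma fiZl m k (A B : 'M[R]_(m,k)) a : frob_inner (a *: B) A = a * frob_inner B A.
Proof. by rewrite fiC fiZr fiC. Qed.
Lemma fiNl m k (A B : 'M[R]_(m,k)) : frob_inner (- B) A = - frob_inner B A.
Proof. by rewrite fiC fiNr fiC. Qed.
Lemma fiBl m k (A B C : 'M[R]_(m,k)) : frob_inner (B - C) A = frob_inner B A - frob_inner C A.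
Proof. by rewrite fiDl fiNl. Qed.

Lemma fi0r m k (A : 'M[R]_(m,k)) : frob_inner A 0 = 0.
Proof. by rewrite /frob_inner mulmx0 mxtrace0. Qed.

Lemma fi_eq0 m k (A : 'M[R]_(m,k)) : frob_inner A A = 0 -> A = 0.
Proof.
rewrite fi_sum => /eqP; rewrite psumr_eq0; last first.
  by move=> i _; apply: sumr_ge0 => j _; rewrite -expr2 sqr_ge0.
move=> /allP H; apply/matrixP => i j; rewrite mxE.
have /implyP := H i (mem_index_enum _) => /(_ isT) /eqP.
move/eqP; rewrite psumr_eq0; last by move=> l _; rewrite -expr2 sqr_ge0.
move=> /allP /(_ j (mem_index_enum _)) /implyP /(_ isT).
by rewrite -expr2 sqrf_eq0 => /eqP.
Qed.

Lemma fi_mulr m k l (A : 'M[R]_(m,k)) (B : 'M[R]_(m,l)) (C : 'M[R]_(l,k)) :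
  frob_inner A (B *m C) = frob_inner (B^T *m A) C.
Proof. by rewrite /frob_inner trmx_mul trmxK mulmxA. Qed.

Lemma fi_mull m k l (A : 'M[R]_(m,k)) (B : 'M[R]_(m,l)) (C : 'M[R]_(l,k)) :
  frob_inner A (B *m C) = frob_inner (A *m C^T) B.
Proof.
by rewrite /frob_inner trmx_mul trmxK mulmxA mxtrace_mulC mulmxA.
Qed.

Lemma fi_tr m k (A B : 'M[R]_(m,k)) : frob_inner A^T B^T = frob_inner A B.
Proof. by rewrite /frob_inner trmxK -mxtrace_tr trmx_mul trmxK mxtrace_mulC. Qed.

End Alg.

Section Obj.
Variables (R : realType) (n p : nat).
Local Notation MM := 'M[R]_(n,p).

Definition phi (Y : MM) : MM := Y *m Amap Y.
Definition dAm (Y E : MM) : 'M[R]_p := - (2^-1 *: (E^T *m Y + Y^T *m E)).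
Definition dphi (Y E : MM) : MM := E *m Amap Y + Y *m dAm Y E.
Definition Psi (Y G : MM) : MM := G *m Amap Y - 2^-1 *: (Y *m G^T *m Y + Y *m Y^T *m G).

Lemma Amap_sym (Y : MM) : (Amap Y)^T = Amap Y.
Proof. by rewrite /Amap linearB /= !linearZ /= tr_scalar_mx trmx_mul trmxK. Qed.

Lemma isd_Amap (Y : MM) : is_diff Y (@Amap R n p) (dAm Y).
Proof.
have -> : @Amap R n p = fun y => (3 / 2) *: 1%:M - 2^-1 *: (y^T *m y) by [].
apply: is_diff_eq.
  apply: isd_sub.
  apply: isd_scale; exact: (is_diff_mulmx (isd_tr (isd_id _)) (isd_id _)).
by apply/funext=> v; rewrite /dAm sub0r.
Qed.

Lemma isd_phi (Y : MM) : is_diff Y phi (dphi Y).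
Proof.
have -> : phi = fun y => y *m Amap y by [].
exact: (is_diff_mulmx (isd_id _) (isd_Amap Y)).
Qed.

Lemma psi_adj (Y G E : MM) : frob_inner G (dphi Y E) = frob_inner (Psi Y G) E.
Proof.
rewrite /dphi /Psi /dAm fiDr fi_mull Amap_sym fi_mulr fiNr fiZr fiDr.
rewrite fiBl fiZl fiDl; congr (_ - _ * (_ + _)).
  rewrite fi_mull -fi_tr !trmx_mul !trmxK mulmxA; done.
by rewrite fi_mulr trmxK mulmxA.
Qed.


Definition Qm (Y : MM) : 'M[R]_p := Y^T *m Y - 1%:M.
Definition GH (f : MM -> R) (beta : R) (Y : MM) : MM :=
  Psi Y (grad f (phi Y)) + beta *: (Y *m Qm Y).

Lemma grad_of (F : MM -> R) Y (G : MM) :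
  is_diff Y F (fun E => frob_inner G E) -> grad F Y = G.
Proof. by case=> _ H; apply/matrixP => i j; rewrite /grad mxE H fi_delta. Qed.

Lemma grad_inner (F : MM -> R) Y E :
  differentiable F Y -> 'd F Y E = frob_inner (grad F Y) E.
Proof.
move=> _; rewrite {1}(matrix_sum_delta E) linear_sum fi_sum; apply: eq_bigr => i _.
rewrite linear_sum; apply: eq_bigr => j _.
by rewrite linearZ /= /grad mxE mulrC.
Qed.

Lemma isd_f (f : MM -> R) Z :
  differentiable f Z -> is_diff Z f (fun E => frob_inner (grad f Z) E).
Proof. move=> H; apply: DiffDef => //; apply/funext=> E; exact: grad_inner. Qed.

Lemma isd_gfun (f : MM -> R) Y : (forall Z, differentiable f Z) ->
  is_diff Y (gfun f) (fun E => frob_inner (Psi Y (grad f (phi Y))) E).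
Proof.
move=> Hf.
have -> : gfun f = f \o phi by [].
apply: is_diff_eq; first exact: (is_diff_comp (isd_phi Y) (isd_f (Hf (phi Y)))).
by apply/funext=> E /=; rewrite psi_adj.
Qed.

Lemma Qm_sym (Y : MM) : (Qm Y)^T = Qm Y.
Proof. by rewrite /Qm linearB /= tr_scalar_mx trmx_mul trmxK. Qed.

Lemma isd_pen (beta : R) Y :
  is_diff Y (fun y : MM => beta / 4 * frob (y^T *m y - 1%:M) ^+ 2)
            (fun E => frob_inner (beta *: (Y *m Qm Y)) E).
Proof.
have -> : (fun y : MM => beta / 4 * frob (y^T *m y - 1%:M) ^+ 2) =
   (fun y => (beta / 4) *: \tr ((Qm y)^T *m Qm y)).
  by apply/funext => y; rewrite frob_sq.
have HQ : is_diff Y (fun y : MM => Qm y) (fun E => E^T *m Y + Y^T *m E).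
  apply: is_diff_eq.
    exact: (isd_sub (is_diff_mulmx (isd_tr (isd_id _)) (isd_id _)) (isd_cst _ _)).
  by apply/funext=> E; rewrite subr0.
apply: is_diff_eq.
  apply: isd_scale; apply: isd_trace; exact: (is_diff_mulmx (isd_tr HQ) HQ).
apply/funext=> E /=.
rewrite linearD /= -/(frob_inner (E^T *m Y + Y^T *m E) (Qm Y)).
rewrite -/(frob_inner (Qm Y) (E^T *m Y + Y^T *m E)) fiC.
have h1 : frob_inner (Qm Y) (E^T *m Y) = frob_inner (Y *m Qm Y) E.
  by rewrite fi_mull -fi_tr trmx_mul !trmxK Qm_sym.
have h2 : frob_inner (Qm Y) (Y^T *m E) = frob_inner (Y *m Qm Y) E.
  by rewrite fi_mulr trmxK.
rewrite fiZl fiDr h1 h2; move: (frob_inner (Y *m Qm Y) E) => c.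
have -> : (beta/4) *: (c + c + (c + c)) = (beta/4) * (c+c+(c+c)) by [].
have -> : c + c + (c + c) = 4 * c by ring.
by rewrite mulrA divfK.
Qed.


Lemma isd_hfun (f : MM -> R) beta Y : (forall Z, differentiable f Z) ->
  is_diff Y (hfun f beta) (fun E => frob_inner (GH f beta Y) E).
Proof.
move=> Hf; have -> : hfun f beta = fun y => gfun f y + beta / 4 * frob (y^T *m y - 1%:M) ^+ 2 by [].
apply: is_diff_eq; first exact: (isd_add (isd_gfun Y Hf) (isd_pen beta Y)).
by apply/funext=> E; rewrite /GH fiDl.
Qed.

Lemma grad_hfun (f : MM -> R) beta : (forall Z, differentiable f Z) ->
  grad (hfun f beta) = GH f beta.
Proof. by move=> Hf; apply/funext=> Y; apply: grad_of; exact: isd_hfun. Qed.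

Lemma grad_gfun (f : MM -> R) : (forall Z, differentiable f Z) ->
  grad (gfun f) = fun Y => Psi Y (grad f (phi Y)).
Proof. by move=> Hf; apply/funext=> Y; apply: grad_of; exact: isd_gfun. Qed.

Definition dGG (f : MM -> R) (X E : MM) : MM :=
  let G0 := grad f (phi X) in let H := ehess f (phi X) (dphi X E) in
  (H *m Amap X + G0 *m dAm X E) - 2^-1 *: (((E *m G0^T + X *m H^T) *m X + (X *m G0^T) *m E)
     + ((E *m X^T + X *m E^T) *m G0 + (X *m X^T) *m H)).

Lemma isd_GG (f : MM -> R) X : differentiable (grad f) (phi X) ->
  is_diff X (fun Y => Psi Y (grad f (phi Y))) (dGG f X).
Proof.
move=> Hd.
have HG : is_diff X (fun Y => grad f (phi Y)) (fun E => ehess f (phi X) (dphi X E)).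
  have Hg : is_diff (phi X) (grad f) (ehess f (phi X)) by apply: DiffDef.
  exact: (is_diff_comp (isd_phi X) Hg).
have H1 := is_diff_mulmx HG (isd_Amap X).
have H2 := is_diff_mulmx (is_diff_mulmx (isd_id X) (isd_tr HG)) (isd_id X).
have H3 := is_diff_mulmx (is_diff_mulmx (isd_id X) (isd_tr (isd_id X))) HG.
exact: (isd_sub H1 (isd_scale 2^-1 (isd_add H2 H3))).
Qed.

Definition dPen (beta : R) (X E : MM) : MM :=
  beta *: (E *m Qm X + X *m (E^T *m X + X^T *m E)).

Lemma isd_Pen beta (X : MM) : is_diff X (fun Y => beta *: (Y *m Qm Y)) (dPen beta X).
Proof.
have HQ : is_diff X (fun y : MM => Qm y) (fun E => E^T *m X + X^T *m E).
  apply: is_diff_eq.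
    exact: (isd_sub (is_diff_mulmx (isd_tr (isd_id _)) (isd_id _)) (isd_cst _ _)).
  by apply/funext=> E; rewrite subr0.
exact: (isd_scale beta (is_diff_mulmx (isd_id X) HQ)).
Qed.

Lemma ehess_h (f : MM -> R) beta X E : (forall Z, differentiable f Z) ->
  differentiable (grad f) (phi X) ->
  ehess (hfun f beta) X E = dGG f X E + dPen beta X E.
Proof.
move=> Hf Hd; rewrite /ehess grad_hfun //.
have := isd_add (isd_GG Hd) (isd_Pen beta X).
by case=> _ ->.
Qed.

Lemma ehess_g (f : MM -> R) X E : (forall Z, differentiable f Z) ->
  differentiable (grad f) (phi X) ->
  ehess (gfun f) X E = dGG f X E.
Proof.
move=> Hf Hd; rewrite /ehess grad_gfun //.
by case: (isd_GG Hd) => _ ->.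
Qed.

End Obj.
Section PhiL.
Variable R : realType.

Lemma Phi_tr k (M : 'M[R]_k) : (Phi M)^T = Phi M.
Proof. by rewrite /Phi linearZ /= linearD /= trmxK addrC. Qed.

Lemma Phi_trI k (M : 'M[R]_k) : Phi M^T = Phi M.
Proof. by rewrite /Phi trmxK addrC. Qed.

Lemma PhiD k (A B : 'M[R]_k) : Phi (A + B) = Phi A + Phi B.
Proof. by rewrite /Phi [(A + B)^T]linearD /= -scalerDr addrACA. Qed.

Lemma PhiN k (A : 'M[R]_k) : Phi (- A) = - Phi A.
Proof. by rewrite /Phi [(- A)^T]linearN /= -scalerN opprD. Qed.

Lemma PhiB k (A B : 'M[R]_k) : Phi (A - B) = Phi A - Phi B.
Proof. by rewrite PhiD PhiN. Qed.

Lemma PhiZ k (A : 'M[R]_k) a : Phi (a *: A) = a *: Phi A.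
Proof. by rewrite /Phi [(a *: A)^T]linearZ /= -scalerDr scalerA mulrC -scalerA. Qed.

Lemma Phi_sym k (A : 'M[R]_k) : A^T = A -> Phi A = A.
Proof.
move=> hA; rewrite /Phi hA -mulr2n -scalerMnr scalerMnl -mulr_natr mulVf ?scale1r // pnatr_eq0.
Qed.

Lemma PhiK k (A : 'M[R]_k) : Phi (Phi A) = Phi A.
Proof. by apply: Phi_sym; exact: Phi_tr. Qed.

Lemma Phi_eq0 k (A : 'M[R]_k) : Phi A = 0 -> A^T = - A.
Proof.
rewrite /Phi => /eqP; rewrite scaler_eq0 invr_eq0 pnatr_eq0 /= => /eqP H.
by rewrite -(addKr A A^T) H addr0.
Qed.

End PhiL.

Section Stat.
Variables (R : realType) (n p : nat).
Local Notation MM := 'M[R]_(n,p).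

Lemma AmapX (X : MM) : X^T *m X = 1%:M -> Amap X = 1%:M.
Proof.
move=> hX; rewrite /Amap hX -scalerBl.
have -> : 3 / 2 - 2^-1 = 1 :> R by lra.
by rewrite scale1r.
Qed.

Lemma phiX (X : MM) : X^T *m X = 1%:M -> phi X = X.
Proof. by move=> hX; rewrite /phi AmapX // mulmx1. Qed.

Lemma QmX (X : MM) : X^T *m X = 1%:M -> Qm X = 0.
Proof. by move=> hX; rewrite /Qm hX subrr. Qed.

Lemma tang_K (X E : MM) : tangent X E -> E^T *m X = - (X^T *m E).
Proof.
move=> /Phi_eq0; rewrite trmx_mul trmxK => ->; by rewrite opprK.
Qed.

Lemma dAm_tan (X E : MM) : tangent X E -> dAm X E = 0.
Proof. by move=> hE; rewrite /dAm (tang_K hE) addNr scaler0 oppr0. Qed.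

Lemma dphi_tan (X E : MM) : X^T *m X = 1%:M -> tangent X E -> dphi X E = E.
Proof. by move=> hX hE; rewrite /dphi dAm_tan // AmapX // mulmx1 mulmx0 addr0. Qed.

Lemma part1_eq (f : MM -> R) (beta : R) (X E : MM) (L : 'M[R]_p) :
  X^T *m X = 1%:M -> grad f X = X *m L -> L^T = L -> tangent X E ->
  dGG f X E + dPen beta X E = rhess f X E.
Proof.
move=> hX hG hL hE.
have hK := tang_K hE.
have -> : dPen beta X E = 0.
  by rewrite /dPen QmX // hK addNr !mulmx0 addr0 scaler0.
rewrite addr0 /dGG /= phiX // dphi_tan // dAm_tan // AmapX // mulmx1 mulmx0 addr0 hG.
have hXXL : X^T *m (X *m L) = L by rewrite mulmxA hX mul1mx.
rewrite /rhess /Ptan hG hXXL (Phi_sym hL).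
set H := ehess f X E.
have hXL : (X *m L)^T = L *m X^T by rewrite trmx_mul hL.
rewrite hXL.
set K := X^T *m E.
have e1 : (E *m (L *m X^T) + X *m H^T) *m X = E *m L + X *m H^T *m X.
  by rewrite mulmxDl -!mulmxA hX mulmx1.
have e2 : X *m (L *m X^T) *m E = X *m L *m K by rewrite -!mulmxA.
have e3 : (E *m X^T + X *m E^T) *m (X *m L) = E *m L - X *m K *m L.
  rewrite mulmxDl; congr (_ + _).
    by rewrite -mulmxA (mulmxA X^T) hX mul1mx.
  by rewrite -mulmxA (mulmxA E^T) hK mulNmx mulmxN mulmxA.
have e4 : X *m X^T *m H = X *m (X^T *m H) by rewrite -mulmxA.
have e5 : X *m Phi (X^T *m (H - E *m L)) =
   2^-1 *: (X *m (X^T *m H) - X *m K *m L + X *m H^T *m X + X *m L *m K).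
  have t1 : X^T *m (H - E *m L) = X^T *m H - K *m L by rewrite mulmxBr mulmxA.
  have tK : K^T = - K by rewrite /K trmx_mul trmxK hK.
  have t2 : (X^T *m H - K *m L)^T = H^T *m X + L *m K.
    by rewrite linearB /= [(K *m L)^T]trmx_mul tK hL [(X^T *m H)^T]trmx_mul trmxK mulmxN opprK.
  rewrite t1 /Phi t2 -scalemxAr; congr (_ *: _).
  by rewrite !mulmxDr mulmxN !mulmxA addrA.
rewrite e1 e2 e3 e4 e5; clear e1 e2 e3 e4 e5; clearbody H K.
move: H (X *m (X^T *m H)) (X *m H^T *m X) (X *m L *m K) (X *m K *m L) (E *m L) => h a b c d e.
apply/matrixP => i j; rewrite !mxE; lra.
Qed.


Lemma halfSS (S : 'M[R]_p) : S^T = S -> 2^-1 *: (S + S) = S.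
Proof. by move=> hS; have := Phi_sym hS; rewrite /Phi hS. Qed.

Lemma normal_GG (f : MM -> R) (X : MM) (S L : 'M[R]_p) :
  X^T *m X = 1%:M -> grad f X = X *m L -> L^T = L -> S^T = S ->
  dGG f X (X *m S) = X *m (- (3/2) *: (L *m S + S *m L)).
Proof.
move=> hX hG hL hS.
have hXXS : X^T *m (X *m S) = S by rewrite mulmxA hX mul1mx.
have hXS : (X *m S)^T = S *m X^T by rewrite trmx_mul hS.
have hdA : dAm X (X *m S) = - S.
  by rewrite /dAm hXS -mulmxA hX mulmx1 hXXS halfSS.
have hdp : dphi X (X *m S) = 0.
  by rewrite /dphi hdA AmapX // mulmx1 mulmxN subrr.
rewrite /dGG /= phiX // hdp hG.
have -> : ehess f X 0 = 0 by rewrite /ehess linear0.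
have hXL : (X *m L)^T = L *m X^T by rewrite trmx_mul hL.
rewrite hXL hXS hdA !trmx0 !mulmx0 !mul0mx addr0 add0r addr0 mulmxN.
have e1 : X *m S *m (L *m X^T) *m X = X *m (S *m L).
  by rewrite -!mulmxA hX mulmx1.
have e2 : X *m (L *m X^T) *m (X *m S) = X *m (L *m S).
  by rewrite -!mulmxA (mulmxA X^T) hX mul1mx.
have e3 : (X *m S *m X^T + X *m (S *m X^T)) *m (X *m L) = X *m (S *m L) + X *m (S *m L).
  by rewrite mulmxDl -!mulmxA (mulmxA X^T) hX mul1mx.
rewrite e1 e2 e3 -mulmxA -scalemxAr mulmxDr.
move: (X *m (S *m L)) (X *m (L *m S)) => a b.
apply/matrixP => i j; rewrite !mxE; lra.
Qed.

Lemma normal_Pen (beta : R) (X : MM) (S : 'M[R]_p) :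
  X^T *m X = 1%:M -> S^T = S ->
  dPen beta X (X *m S) = X *m (beta *: (S + S)).
Proof.
move=> hX hS.
rewrite /dPen QmX // mulmx0 add0r trmx_mul hS -mulmxA hX mulmx1 mulmxA hX mul1mx.
by rewrite scalemxAr.
Qed.

End Stat.

Section Ana.
Variable R : realType.

Lemma fi_quad m k (A B : 'M[R]_(m,k)) t :
  frob_inner (t *: A + B) (t *: A + B) =
  t ^+ 2 * frob_inner A A + 2 * t * frob_inner A B + frob_inner B B.
Proof.
rewrite !fiDl !fiDr !fiZl !fiZr (fiC B A).
move: (frob_inner A A) (frob_inner A B) (frob_inner B B) => a b d; lra.
Qed.

Lemma fi_CS m k (A B : 'M[R]_(m,k)) :
  frob_inner A B ^+ 2 <= frob_inner A A * frob_inner B B.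
Proof.
have key : forall t, 0 <= t ^+ 2 * frob_inner A A + 2 * t * frob_inner A B + frob_inner B B.
  by move=> t; rewrite -fi_quad fi_ge0.
have ha := fi_ge0 A; have hd := fi_ge0 B.
move: ha hd key; move: (frob_inner A A) (frob_inner A B) (frob_inner B B) => a b d ha hd key.
have [a0|apos] := eqVneq a 0.
  subst a.
  have [b0|bn0] := eqVneq b 0; first by subst b; rewrite expr2 mulr0 mul0r.
  have ht : 2 * (- (d + 1) / (2 * b)) * b = - (d + 1).
    by field.
  have := key (- (d + 1) / (2 * b)); rewrite ht; lra.
have ha' : 0 < a by rewrite lt_def apos ha.
have ht : (- b / a) * a = - b by rewrite divfK.
have := key (- b / a).
move: (- b / a) ht => t ht H.
nra.
Qed.


Lemma fi_gt0 m k (E : 'M[R]_(m,k)) : E != 0 -> 0 < frob_inner E E.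
Proof.
move=> hE; rewrite lt_def fi_ge0 andbT; apply/eqP => h0; move/eqP: hE; apply.
exact: fi_eq0.
Qed.

Lemma ratio_bound m k (E B : 'M[R]_(m,k)) h c :
  h != 0 -> E != 0 -> frob B / frob (h *: E) <= c ->
  - c * frob_inner E E <= h^-1 * frob_inner E B.
Proof.
move=> hh hE hr.
have ha := fi_gt0 hE.
have fhE : frob (h *: E) ^+ 2 = h ^+ 2 * frob_inner E E.
  by rewrite frob_sq fiZl fiZr mulrA -expr2.
have fpos : 0 < frob (h *: E).
  rewrite lt_def frob_ge0 andbT; apply/eqP => h0; move: fhE; rewrite h0 expr0n /=.
  move=> /esym /eqP; rewrite mulf_eq0 expf_eq0 /= (negbTE hh) /= => /eqP h1.
  by move: ha; rewrite h1 ltxx.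
have hB : frob B <= c * frob (h *: E) by rewrite -ler_pdivrMr.
have fB := frob_ge0 B.
have hB2 : frob_inner B B <= c ^+ 2 * (h ^+ 2 * frob_inner E E).
  rewrite -frob_sq -fhE -exprMn; nra.
have cs := fi_CS E B.
have c0 : 0 <= c by nra.
move: hB2 cs ha c0; move: (frob_inner E E) (frob_inner E B) (frob_inner B B) => a b d hB2 cs ha c0.
have hb : b ^+ 2 <= (c * `|h| * a) ^+ 2.
  apply: (le_trans cs); rewrite !exprMn real_normK ?num_real //; nra.
have K0 : 0 <= c * `|h| * a by rewrite !mulr_ge0 // ltW.
have hb1 : - (c * `|h| * a) <= b by nra.
have hb2 : b <= c * `|h| * a by nra.
have [hpos|hneg] := ltrP 0 h.
  rewrite gtr0_norm // in hb1 hb2.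
  have hu : 0 < h^-1 by rewrite invr_gt0.
  have hi : h^-1 * h = 1 by rewrite mulVf.
  nra.
have hlt : h < 0 by rewrite lt_neqAle hh hneg.
rewrite ltr0_norm // in hb1 hb2.
have hu : h^-1 < 0 by rewrite invr_lt0.
have hi : h^-1 * h = 1 by rewrite mulVf.
nra.
Qed.


Lemma mul_entry_fi m k q (E : 'M[R]_(m,k)) (v : 'M[R]_(k,q)) i j :
  (E *m v) i j = frob_inner (row i E)^T (col j v).
Proof.
rewrite mxE fi_sum; apply: eq_bigr => l _.
by rewrite big_ord1 !mxE.
Qed.

Lemma fi_row m k (E : 'M[R]_(m,k)) :
  \sum_i frob_inner (row i E)^T (row i E)^T = frob_inner E E.
Proof.
rewrite [RHS]fi_sum; apply: eq_bigr => i _; rewrite fi_sum; apply: eq_bigr => l _.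
by rewrite big_ord1 !mxE.
Qed.

Lemma fi_col k q (v : 'M[R]_(k,q)) :
  \sum_j frob_inner (col j v) (col j v) = frob_inner v v.
Proof.
rewrite [RHS]fi_sum [RHS]exchange_big /=; apply: eq_bigr => j _; rewrite fi_sum.
by apply: eq_bigr => l _; rewrite big_ord1 !mxE.
Qed.

Lemma fi_mul_bound m k q (E : 'M[R]_(m,k)) (v : 'M[R]_(k,q)) :
  frob_inner (E *m v) (E *m v) <= frob_inner E E * frob_inner v v.
Proof.
rewrite -(fi_row E) -(fi_col v) mulr_suml [X in _ <= X](eq_bigr (fun i => \sum_j
   frob_inner (row i E)^T (row i E)^T * frob_inner (col j v) (col j v))); last first.
  by move=> i _; rewrite mulr_sumr.
rewrite fi_sum; apply: ler_sum => i _; apply: ler_sum => j _.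
by rewrite mul_entry_fi -expr2 fi_CS.
Qed.

End Ana.

Section Om.
Variables (R : realType) (n p : nat).
Local Notation MM := 'M[R]_(n,p).

Lemma frob_le1 m k (v : 'M[R]_(m,k)) : frob v <= 1 -> frob_inner v v <= 1.
Proof. by move=> hv; rewrite -frob_sq; have := frob_ge0 v; nra. Qed.

Lemma omega_nbhd (X E : MM) : X^T *m X = 1%:M ->
  exists2 d : R, 0 < d & forall h : R, `|h| < d -> Omega (h *: E + X).
Proof.
move=> hX.
have c0 := fi_ge0 E.
have hx : 0 < 6 * (2 * frob_inner E E + 1) by lra.
exists (6 * (2 * frob_inner E E + 1))^-1; first by rewrite invr_gt0.
move=> h hh.
have hd : `|h| * (6 * (2 * frob_inner E E + 1)) < 1.
  by rewrite -ltr_pdivlMr // mul1r.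
rewrite /Omega /opnorm2; apply: ge_sup.
  exists (frob ((h *: E + X) *m (0 : 'cV[R]_p))); exists 0 => //=.
  have := frob_sq (0 : 'cV[R]_p); rewrite fi0r => H0.
  have := frob_ge0 (0 : 'cV[R]_p); nra.
move=> y [v hv <-].
have hv2 := frob_le1 hv.
have -> : (h *: E + X) *m v = h *: (E *m v) + X *m v by rewrite mulmxDl scalemxAl.
have hXv : frob_inner (X *m v) (X *m v) = frob_inner v v.
  by rewrite fi_mulr mulmxA hX mul1mx.
have hEv := fi_mul_bound E v.
have cs := fi_CS (E *m v) (X *m v).
have fw := frob_ge0 (h *: (E *m v) + X *m v).
have := frob_sq (h *: (E *m v) + X *m v); rewrite fi_quad hXv.
rewrite hXv in cs.
have ha := fi_ge0 (E *m v); have he := fi_ge0 v.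
move: hEv cs ha he hv2 fw hd c0.
move: (frob_inner (E *m v) (E *m v)) (frob_inner (E *m v) (X *m v)) (frob_inner v v)
      (frob_inner E E) (frob (h *: (E *m v) + X *m v)) => a b e c F hEv cs ha he hv2 fw hd c0 hF.
have t0 := normr_ge0 h.
have hh2 : h ^+ 2 = `|h| ^+ 2 by rewrite real_normK ?num_real.
have hb : 2 * h * b <= `|h| * (a + e).
  have h2b : 2 * `|b| <= a + e.
    have : `|b| ^+ 2 <= a * e by rewrite real_normK ?num_real.
    have := normr_ge0 b; have := sqr_ge0 (a - e); nra.
  have := ler_norm (2 * h * b); rewrite !normrM ger0_norm ?(ler0n _ 2) // => H.
  apply: (le_trans H); rewrite -mulrA; nra.
have ht1 : `|h| <= 1 by nra.
have hce : a <= c by nra.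
have s0 : 0 <= `|h| * a * (1 - `|h|) by rewrite !mulr_ge0 // subr_ge0.
have s1 : `|h| ^+ 2 * a <= `|h| * a by nra.
have s2 : `|h| * (a + e) + `|h| * a <= `|h| * (2 * c + 1) by nra.
have hF2 : F ^+ 2 <= 1 + 6^-1.
  rewrite hF hh2; lra.
nra.
Qed.


Lemma hess_bound (f : MM -> R) (X E : MM) (m : R) :
  (forall Z, differentiable f Z) -> differentiable (grad f) X -> X^T *m X = 1%:M ->
  E != 0 ->
  (forall Y1 Y2 : MM, Omega Y1 -> Omega Y2 -> Y1 != Y2 ->
      frob (grad (gfun f) Y1 - grad (gfun f) Y2) / frob (Y1 - Y2) <= m) ->
  - m * frob_inner E E <= frob_inner E (ehess (gfun f) X E).
Proof.
move=> Hf Hd hX hE Hm.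
have Hd' : differentiable (grad f) (phi X) by rewrite phiX.
rewrite ehess_g //.
have HGG := isd_GG Hd'.
set GG := (fun Y => Psi Y (grad f (phi Y))) in HGG.
have Hq : is_diff X (fun Y => frob_inner E (GG Y)) (fun v => frob_inner E (dGG f X v)).
  apply: is_diff_eq.
    exact: (isd_trace (is_diff_mulmx (isd_cst E^T X) HGG)).
  by apply/funext=> v; rewrite mul0mx add0r.
have -> : frob_inner E (dGG f X E) = 'D_E (fun Y => frob_inner E (GG Y)) X.
  by rewrite deriveE; [case: Hq => _ ->|case: Hq].
have [d d0 Hdd] := omega_nbhd E hX.
have HX : Omega X by have := Hdd 0; rewrite normr0 scale0r add0r; apply.
rewrite /derive; apply: limr_ge.
  by apply: diff_derivable; case: Hq.
near=> h.
have hh : h != 0 by near: h; exact: nbhs_dnbhs_neq.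
have hd : `|h| < d by near: h; exact: dnbhs0_lt.
rewrite /= -fiBr.
apply: (ratio_bound hh hE).
have hY : h *: E + X - X = h *: E by rewrite addrK.
have hne : h *: E + X != X by rewrite -subr_eq0 hY scaler_eq0 negb_or hh.
have H1 := Hm (h *: E + X) X (Hdd h hd) HX hne.
by rewrite (grad_gfun Hf) /= hY in H1.
Unshelve. all: by end_near.
Qed.

End Om.

Section PT.
Variables (R : realType) (n p : nat).
Local Notation MM := 'M[R]_(n,p).

Lemma PtanD (X A B : MM) : Ptan X (A + B) = Ptan X A + Ptan X B.
Proof. by rewrite /Ptan mulmxDr PhiD mulmxDr opprD addrACA. Qed.

Lemma PtanZ (X A : MM) a : Ptan X (a *: A) = a *: Ptan X A.
Proof. by rewrite /Ptan -(scalemxAr a X^T A) PhiZ -scalemxAr scalerBr. Qed.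

Lemma XtPtan (X W : MM) : X^T *m X = 1%:M ->
  X^T *m Ptan X W = X^T *m W - Phi (X^T *m W).
Proof. by move=> hX; rewrite /Ptan mulmxBr mulmxA hX mul1mx. Qed.

Lemma Ptan_idem (X W : MM) : X^T *m X = 1%:M -> Ptan X (Ptan X W) = Ptan X W.
Proof.
move=> hX; rewrite {1}/Ptan XtPtan // PhiB PhiK subrr mulmx0 subr0.
by [].
Qed.

Lemma Ptan_normal (X : MM) (N : 'M[R]_p) : X^T *m X = 1%:M -> N^T = N ->
  Ptan X (X *m N) = 0.
Proof. by move=> hX hN; rewrite /Ptan mulmxA hX mul1mx Phi_sym // subrr. Qed.

Lemma Ptan_tangent (X W : MM) : X^T *m X = 1%:M -> tangent X (Ptan X W).
Proof.
move=> hX; rewrite /tangent.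
have -> : (Ptan X W)^T *m X = (X^T *m Ptan X W)^T by rewrite trmx_mul trmxK.
by rewrite Phi_trI XtPtan // PhiB PhiK subrr.
Qed.

Lemma rhess_idem (f : MM -> R) (X D : MM) : X^T *m X = 1%:M ->
  Ptan X (rhess f X D) = rhess f X D.
Proof. by move=> hX; rewrite /rhess Ptan_idem. Qed.

End PT.

Unset Implicit Arguments.

Theorem mainTheorem12 (R : realType) (n p : nat) (f : 'M[R]_(n, p) -> R)
  (beta : R) (X : 'M[R]_(n, p)) :
  (p <= n)%N ->
  0 < beta ->
  (forall Y, differentiable f Y) ->
  loc_lipschitz_R f ->
  loc_lipschitz_M (grad f) ->
  (forall Y, twice_differentiable f Y) ->
  first_order_stationary f X ->
  (forall l : R, rhess_eigenvalue f X l -> ehess_eigenvalue (hfun f beta) X l) /\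
  (forall l : R, ehess_eigenvalue (hfun f beta) X l ->
     rhess_eigenvalue f X l \/ ((2 * beta)%:E - M2 f <= l%:E)%E).
Proof.
move=> _ hb Hf _ _ Htd [hX hst]; rewrite /stiefel in hX.
have Hd : differentiable (grad f) X by case: (Htd X).
have Hd' : differentiable (grad f) (phi X) by rewrite phiX.
set L := Phi (X^T *m grad f X) in hst.
have hL : L^T = L by exact: Phi_tr.
have hG : grad f X = X *m L by apply/eqP; rewrite -subr_eq0; apply/eqP.
have EH E : ehess (hfun f beta) X E = dGG f X E + dPen beta X E by exact: ehess_h.
split.
  move=> l [D [hT hD0 hR]]; exists D; split => //.
  by rewrite EH (part1_eq beta hX hG hL hT) hR.
move=> l [D [hD0 hE]].
set S := Phi (X^T *m D).
have hS : S^T = S by exact: Phi_tr.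
set Dt := Ptan X D.
have hDdec : D = Dt + X *m S by rewrite /Dt /Ptan subrK.
have hTt : tangent X Dt by exact: Ptan_tangent.
set N1 := - (3/2) *: (L *m S + S *m L).
set N := N1 + beta *: (S + S).
have hN1 : N1^T = N1.
  by rewrite /N1 linearZ /= linearD /= !trmx_mul hL hS addrC.
have hN : N^T = N.
  by rewrite /N linearD /= hN1 linearZ /= linearD /= hS.
have hHS : ehess (hfun f beta) X (X *m S) = X *m N.
  by rewrite EH (normal_GG hX hG hL hS) (normal_Pen beta hX hS) -mulmxDr.
have e0 : ehess (hfun f beta) X D = ehess (hfun f beta) X Dt + ehess (hfun f beta) X (X *m S).
  by rewrite {1}hDdec /ehess linearD.
have eDt : ehess (hfun f beta) X Dt = rhess f X Dt.
  by rewrite EH (part1_eq beta hX hG hL hTt).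
have hE2 : rhess f X Dt + X *m N = l *: Dt + l *: (X *m S).
  by rewrite -eDt -hHS -e0 hE {1}hDdec scalerDr.
have hRt : rhess f X Dt = l *: Dt.
  have := congr1 (Ptan X) hE2.
  rewrite PtanD rhess_idem // (Ptan_normal hX hN) PtanD !PtanZ (Ptan_normal hX hS) Ptan_idem //.
  by rewrite scaler0 !addr0.
have [Dt0|Dtn0] := eqVneq Dt 0; last first.
  by left; exists Dt; split.
right.
have hXN : X *m N = l *: (X *m S) by move: hE2; rewrite hRt => /addrI.
have hNS : N = l *: S.
  have := congr1 (mulmx X^T) hXN.
  by rewrite -scalemxAr !mulmxA hX !mul1mx.
have hS0 : X *m S != 0.
  by apply: contra hD0 => /eqP h0; rewrite hDdec Dt0 h0 addr0.
have hXSXS : frob_inner (X *m S) (X *m S) = frob_inner S S.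
  by rewrite fi_mulr mulmxA hX mul1mx.
have key : forall m : R,
   (forall Y1 Y2 : 'M[R]_(n,p), Omega Y1 -> Omega Y2 -> Y1 != Y2 ->
      frob (grad (gfun f) Y1 - grad (gfun f) Y2) / frob (Y1 - Y2) <= m) ->
   2 * beta - m <= l.
  move=> m Hm.
  have hB := hess_bound Hf Hd hX hS0 Hm.
  rewrite ehess_g // (normal_GG hX hG hL hS) hXSXS -/N1 fi_mulr mulmxA hX mul1mx in hB.
  have hSS : 0 < frob_inner S S.
    by rewrite -hXSXS; exact: fi_gt0.
  have e1 : frob_inner S N = l * frob_inner S S by rewrite hNS fiZr.
  have e2 : frob_inner S N = frob_inner S N1 + 2 * beta * frob_inner S S.
    by rewrite /N fiDr fiZr fiDr; move: (frob_inner S N1) (frob_inner S S) => u v; lra.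
  move: hB hSS e1 e2; move: (frob_inner S S) (frob_inner S N) (frob_inner S N1) => s a b.
  nra.
case hM : (M2 f) => [m| |].
- rewrite -EFinB lee_fin; apply: key => Y1 Y2 h1 h2 h12.
  rewrite -lee_fin -hM; apply: ereal_sup_ubound.
  by exists (Y1, Y2).
- by rewrite /= leNye.
- exfalso.
  have [d d0 Hdd] := omega_nbhd (X *m S) hX.
  have hd2 : `|d / 2| < d by rewrite ger0_norm ?divr_ge0 ?ltW // ltr_pdivrMr // ltr_pMr // ltr1n.
  set Y1 := d / 2 *: (X *m S) + X.
  have hne : Y1 != X.
    rewrite -subr_eq0 /Y1 addrK scaler_eq0 negb_or hS0 andbT.
    by rewrite mulf_neq0 ?invr_eq0 ?pnatr_eq0 // gt_eqF.
  have HX : Omega X by have := Hdd 0; rewrite normr0 scale0r add0r; apply.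
  have := @ereal_sup_ubound _ [set (frob (grad (gfun f) XY.1 - grad (gfun f) XY.2) / frob (XY.1 - XY.2))%:E
            | XY in [set XY : 'M[R]_(n, p) * 'M[R]_(n, p) |
                     [/\ Omega XY.1, Omega XY.2 & XY.1 != XY.2]]] _ (ex_intro2 _ _ (Y1, X) (And3 (Hdd _ hd2) HX hne) erefl).
  by rewrite -/(M2 f) hM leeNy_eq.
Qed.
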